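(* Let $n\ge 1$ and let $u:([0,1]^n,d_n)\to([0,1],d)$ be uniformly continuous, where $d$ is the standard metric on $[0,1]$ and $d_n$ the max-metric on $[0,1]^n$. The following are equivalent: (1) For every complete metric space $(Y,d)$ of diameter at most 1 and all uniformly continuous $\phi_i,\phi_i':Y\to[0,1]$ ($i=1,\dots,n$) with $\phi_i\simeq\phi_i'$ for each $i$, one has $u(\phi_1,\dots,\phi_n)\simeq u(\phi_1',\dots,\phi_n')$. (2) For all $p,q\in[0,1]^n$ such that $p_i=0\iff q_i=0$ for every $i$, either $u(p)=u(q)=0$, or $u(p)>0$ and $u(q)>0$. (3) There is $A\subseteq\mathcal P(\{1,\dots,n\})$ such that $u^{-1}(0)=\bigcup_{K\in A}\{z\in[0,1]^n : z_i=0\iff i\in K\}$.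
   Context: For functions $\alpha,\beta:Y\to[0,1]$ write $\alpha\sqsubseteq\beta$ if for every $\varepsilon>0$ there exists $\delta>0$ such that for all $y$, $\alpha(y)\le\delta$ implies $\beta(y)\le\varepsilon$; and $\alpha\simeq\beta$ if $\alpha\sqsubseteq\beta$ and $\beta\sqsubseteq\alpha$. For functions $\phi_1,\dots,\phi_n:Y\to[0,1]$, $u(\phi_1,\dots,\phi_n)$ denotes the function $y\mapsto u(\phi_1(y),\dots,\phi_n(y))$. *)

(* Defs.v *)
(* Stdlib reals (R), with MathComp ordinals 'I_n and finite sets {set 'I_n}
   for the index set {1,...,n} (represented as {0,...,n-1}). *)
From Stdlib Require Import Reals.
From mathcomp Require Import all_boot.
Open Scope R_scope.

Definition is_metric {Y : Type} (d : Y -> Y -> R) : Prop :=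
  (forall x y, 0 <= d x y) /\
  (forall x y, d x y = 0 <-> x = y) /\
  (forall x y, d x y = d y x) /\
  (forall x y z, d x z <= d x y + d y z).

Definition cauchy_seq {Y : Type} (d : Y -> Y -> R) (s : nat -> Y) : Prop :=
  forall eps, 0 < eps -> exists N : nat,
    forall m k : nat, (N <= m)%N -> (N <= k)%N -> d (s m) (s k) < eps.

Definition converges_to {Y : Type} (d : Y -> Y -> R) (s : nat -> Y) (l : Y) : Prop :=
  forall eps, 0 < eps -> exists N : nat, forall m : nat, (N <= m)%N -> d (s m) l < eps.

Definition complete_metric {Y : Type} (d : Y -> Y -> R) : Prop :=
  is_metric d /\
  forall s : nat -> Y, cauchy_seq d s -> exists l, converges_to d s l.

Definition diam_le1 {Y : Type} (d : Y -> Y -> R) : Prop :=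
  forall x y, d x y <= 1.

Definition unif_cont01 {Y : Type} (d : Y -> Y -> R) (f : Y -> R) : Prop :=
  (forall y, 0 <= f y <= 1) /\
  forall eps, 0 < eps -> exists delta, 0 < delta /\
    forall x y, d x y < delta -> Rabs (f x - f y) < eps.

Definition fsub {Y : Type} (alpha beta : Y -> R) : Prop :=
  forall eps, 0 < eps -> exists delta, 0 < delta /\
    forall y, alpha y <= delta -> beta y <= eps.

Definition fequiv {Y : Type} (alpha beta : Y -> R) : Prop :=
  fsub alpha beta /\ fsub beta alpha.

Definition in_cube (n : nat) (p : 'I_n -> R) : Prop :=
  forall i, 0 <= p i <= 1.

(* u : ([0,1]^n, d_n) -> ([0,1], d) uniformly continuous;
   d_n(p,q) < delta  <->  forall i, |p i - q i| < delta *)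
Definition unif_cont_cube (n : nat) (u : ('I_n -> R) -> R) : Prop :=
  (forall p, in_cube _ p -> 0 <= u p <= 1) /\
  forall eps, 0 < eps -> exists delta, 0 < delta /\
    forall p q, in_cube _ p -> in_cube _ q ->
      (forall i, Rabs (p i - q i) < delta) -> Rabs (u p - u q) < eps.

Definition ucomp {Y : Type} (n : nat) (u : ('I_n -> R) -> R) (phi : 'I_n -> Y -> R)
  : Y -> R := fun y => u (fun i => phi i y).

(* Main.v *)
Require Import Defs.
From Stdlib Require Import Reals Lra Lia ClassicalEpsilon Classical.
From mathcomp Require Import all_boot all_algebra.
From mathcomp Require Import all_classical all_reals all_analysis.
From mathcomp Require Import Rstruct Rstruct_topology.
Import numFieldNormedType.Exports.

Section ClusterSec.
Local Open Scope classical_set_scope.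
Lemma cluster_cube (I : finType) (x : nat -> I -> R) :
  (forall k i, Rle 0 (x k i) /\ Rle (x k i) 1) ->
  exists c : I -> R, (forall i, Rle 0 (c i) /\ Rle (c i) 1) /\
    forall eta, Rlt 0 eta -> forall N, exists k, (N <= k)%N /\
      forall i, Rlt (Rabs (Rminus (x k i) (c i))) eta.
Proof.
move=> hx.
have := @tychonoff I (fun _ => R) (fun _ => `[0%R, 1%R]) (fun _ => @segment_compact R 0%R 1%R).
have PF : ProperFilter (x @ \oo) by exact: fmap_proper_filter.
move=> /(_ (x @ \oo) PF) [].
  rewrite /fmap /=. exists 0%N => // k _ i /=; rewrite in_itv /=; have [h1 h2] := hx k i.
  by apply/andP; split; apply/RleP.
move=> c [Ac clc]; exists c; split.
  move=> i; have := Ac i; rewrite /= in_itv /= => /andP[h1 h2].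
  by split; apply/RleP.
move=> eta eta0 N.
have := clc [set f | exists2 k, (N <= k)%N & f = x k] [set f | forall i, Rlt (Rabs (Rminus (f i) (c i))) eta].
case.
- exists N => // k hk /=; by exists k.
- apply: (@filter_forall _ I (fun i => [set f : (forall i : I, R) | Rlt (Rabs (Rminus (f i) (c i))) eta]) (nbhs c) _) => i.
  have : \forall f \near c, ball (c i) eta (f i).
    apply: (@proj_continuous I (fun _ => R) i c).
    apply: nbhsx_ballx. exact/RltP.
  apply: filterS => f.
  rewrite /ball /= => /RltP.
  by rewrite -Rabs_Ropp Ropp_minus_distr.
- move=> f [[k hk ->] h]; by exists k.
Qed.
End ClusterSec.

Open Scope R_scope.

Lemma fsub_unit_false (a b : R) :
  fsub (fun _ : unit => a) (fun _ => b) -> a = 0 -> 0 < b -> False.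
Proof.
intros H ha hb. destruct (H (b/2)) as [dl [dlp Hd]]; [lra|].
specialize (Hd tt). rewrite ha in Hd. lra.
Qed.

Lemma fsub_const (a b : R) :
  0 <= a -> (a = 0 -> b = 0) -> fsub (fun _ : unit => a) (fun _ => b).
Proof.
intros ha hab eps eps0. destruct (Req_dec a 0) as [e|ne].
- exists 1; split; [lra|]. intros _ _. rewrite (hab e). lra.
- exists (a/2); split; [lra|]. intros _ h. lra.
Qed.

Lemma key (n : nat) (u : ('I_n -> R) -> R) (hu : unif_cont_cube n u)
  (P2 : forall p q : 'I_n -> R, in_cube _ p -> in_cube _ q ->
     (forall i, p i = 0 <-> q i = 0) ->
     (u p = 0 /\ u q = 0) \/ (0 < u p /\ 0 < u q))
  (Y : Type) (phi phi' : 'I_n -> Y -> R) :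
  (forall i y, 0 <= phi i y <= 1) -> (forall i y, 0 <= phi' i y <= 1) ->
  (forall i, fsub (phi i) (phi' i)) -> (forall i, fsub (phi' i) (phi i)) ->
  fsub (ucomp n u phi) (ucomp n u phi').
Proof.
intros h1 h2 s1 s2.
apply NNPP; intro H.
assert (HE : exists eps, 0 < eps /\ forall delta, 0 < delta ->
   exists y, ucomp n u phi y <= delta /\ eps < ucomp n u phi' y).
{ apply NNPP; intro H2; apply H; intros eps eps0. apply NNPP; intro H3.
  apply H2. exists eps; split; auto. intros delta d0. apply NNPP; intro H4.
  apply H3. exists delta; split; auto. intros y hy. apply Rnot_lt_le. intro hlt.
  apply H4. exists y; auto. }
destruct HE as [eps [eps0 Hs]].
assert (hy : forall k : nat, exists y, ucomp n u phi y <= / (INR k + 1) /\ eps < ucomp n u phi' y).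
{ intro k. apply Hs. apply Rinv_0_lt_compat. pose proof (pos_INR k); lra. }
set ys := fun k => proj1_sig (ClassicalEpsilon.constructive_indefinite_description _ (hy k)).
assert (hys : forall k, ucomp n u phi (ys k) <= / (INR k + 1) /\ eps < ucomp n u phi' (ys k)).
{ intro k. exact (proj2_sig (ClassicalEpsilon.constructive_indefinite_description _ (hy k))). }
set x := fun k (j : ('I_n + 'I_n)%type) => match j with inl i => phi i (ys k) | inr i => phi' i (ys k) end.
destruct (@cluster_cube _ x) as [c [hc01 hc]].
{ intros k [i|i]; simpl; [apply h1|apply h2]. }
set a := fun i => c (inl i). set b := fun i => c (inr i).
destruct hu as [hu0 huc].
assert (ca : in_cube n a) by (intro i; apply hc01).
assert (cb : in_cube n b) by (intro i; apply hc01).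
assert (cak : forall k, in_cube n (fun i => phi i (ys k))) by (intros k i; apply h1).
assert (cbk : forall k, in_cube n (fun i => phi' i (ys k))) by (intros k i; apply h2).
assert (F1 : u a = 0).
{ destruct (hu0 a ca) as [ua0 _].
  destruct (Req_dec (u a) 0) as [e|ne]; auto. exfalso.
  assert (up : 0 < u a) by lra.
  destruct (huc (u a / 2)) as [dl [dlp Hd]]; [lra|].
  destruct (archimed_cor1 (u a / 2)) as [N [HN N0]]; [lra|].
  destruct (hc dl dlp N) as [k [hk hck]].
  specialize (Hd _ _ (cak k) ca (fun i => hck (inl i))).
  apply Rabs_def2 in Hd.
  destruct (hys k) as [hk1 _]. unfold ucomp in hk1.
  assert (INR N <= INR k) by (apply le_INR; apply/leP; exact hk).
  assert (/ (INR k + 1) <= / INR N).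
  { apply Rinv_le_contravar; [apply lt_0_INR; lia|lra]. }
  lra. }
assert (F2 : eps <= u b).
{ apply Rnot_lt_le; intro hlt.
  destruct (huc (eps - u b)) as [dl [dlp Hd]]; [lra|].
  destruct (hc dl dlp 0%N) as [k [_ hck]].
  specialize (Hd _ _ (cbk k) cb (fun i => hck (inr i))).
  apply Rabs_def2 in Hd.
  destruct (hys k) as [_ hk2]. unfold ucomp in hk2. lra. }
assert (F3 : forall i, a i = 0 <-> b i = 0).
{ intro i. split; intro hz.
  - destruct (Req_dec (b i) 0) as [e|ne]; auto. exfalso.
    assert (bp : 0 < b i) by (destruct (cb i); lra).
    destruct (s1 i (b i / 2)) as [th [thp Ht]]; [lra|].
    destruct (hc (Rmin th (b i / 2))) with (N := 0%N) as [k [_ hck]].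
    { apply Rmin_pos; lra. }
    pose proof (hck (inl i)) as q1. pose proof (hck (inr i)) as q2.
    unfold x in q1, q2; simpl in q1, q2. change (c (inl i)) with (a i) in q1; change (c (inr i)) with (b i) in q2.
    pose proof (Rmin_l th (b i / 2)). pose proof (Rmin_r th (b i / 2)).
    apply Rabs_def2 in q1. apply Rabs_def2 in q2.
    assert (phi' i (ys k) <= b i / 2) by (apply Ht; lra).
    lra.
  - destruct (Req_dec (a i) 0) as [e|ne]; auto. exfalso.
    assert (ap : 0 < a i) by (destruct (ca i); lra).
    destruct (s2 i (a i / 2)) as [th [thp Ht]]; [lra|].
    destruct (hc (Rmin th (a i / 2))) with (N := 0%N) as [k [_ hck]].
    { apply Rmin_pos; lra. }
    pose proof (hck (inl i)) as q1. pose proof (hck (inr i)) as q2.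
    unfold x in q1, q2; simpl in q1, q2. change (c (inl i)) with (a i) in q1; change (c (inr i)) with (b i) in q2.
    pose proof (Rmin_l th (a i / 2)). pose proof (Rmin_r th (a i / 2)).
    apply Rabs_def2 in q1. apply Rabs_def2 in q2.
    assert (phi i (ys k) <= a i / 2) by (apply Ht; lra).
    lra. }
destruct (P2 a b ca cb F3) as [[_ e]|[e _]]; lra.
Qed.

Theorem mainTheorem7 (n : nat) (hn : (1 <= n)%N) (u : ('I_n -> R) -> R)
  (hu : unif_cont_cube n u) :
  ((* (1) *)
   (forall (Y : Type) (d : Y -> Y -> R), complete_metric d -> diam_le1 d ->
     forall phi phi' : 'I_n -> Y -> R,
       (forall i, unif_cont01 d (phi i)) -> (forall i, unif_cont01 d (phi' i)) ->
       (forall i, fequiv (phi i) (phi' i)) ->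
       fequiv (ucomp n u phi) (ucomp n u phi'))
   <->
   (* (2) *)
   (forall p q : 'I_n -> R, in_cube _ p -> in_cube _ q ->
     (forall i, p i = 0 <-> q i = 0) ->
     (u p = 0 /\ u q = 0) \/ (0 < u p /\ 0 < u q)))
  /\
  ((* (2) *)
   (forall p q : 'I_n -> R, in_cube _ p -> in_cube _ q ->
     (forall i, p i = 0 <-> q i = 0) ->
     (u p = 0 /\ u q = 0) \/ (0 < u p /\ 0 < u q))
   <->
   (* (3) *)
   (exists A : {set {set 'I_n}},
     forall z : 'I_n -> R, in_cube _ z ->
       (u z = 0 <-> exists2 K, K \in A & forall i, z i = 0 <-> i \in K))).
Proof.
pose proof hu as [hu0 huc].
split; split.
- intros P1 p q cp cq hpq.
  destruct (hu0 p cp) as [up _]. destruct (hu0 q cq) as [uq _].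
  set d := fun (_ _ : unit) => 0.
  assert (cm : complete_metric d).
  { split; [split; [|split; [|split]]|].
    - intros; unfold d; lra.
    - intros [] []; unfold d; split; auto.
    - intros; reflexivity.
    - intros; unfold d; lra.
    - intros s _. exists tt. intros eps eps0. exists 0%N. intros m _. unfold d. exact eps0. }
  assert (dm : diam_le1 d) by (intros ? ?; unfold d; lra).
  assert (E := P1 unit d cm dm (fun i _ => p i) (fun i _ => q i)).
  assert (U1 : forall i, unif_cont01 d (fun _ => p i)).
  { intro i; split; [intros _; apply cp|]. intros eps eps0; exists 1; split; [lra|].
    intros; rewrite Rminus_diag Rabs_R0; exact eps0. }
  assert (U2 : forall i, unif_cont01 d (fun _ => q i)).
  { intro i; split; [intros _; apply cq|]. intros eps eps0; exists 1; split; [lra|].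
    intros; rewrite Rminus_diag Rabs_R0; exact eps0. }
  assert (FE : forall i, fequiv (fun _ : unit => p i) (fun _ => q i)).
  { intro i; split; apply fsub_const.
    - apply cp.
    - apply hpq.
    - apply cq.
    - apply hpq. }
  destruct (E U1 U2 FE) as [E1 E2].
  unfold ucomp in E1, E2.
  destruct (Req_dec (u p) 0) as [ep|np]; destruct (Req_dec (u q) 0) as [eq|nq].
  + left; auto.
  + exfalso. apply (fsub_unit_false _ _ E1); [exact ep|change (0 < u q); lra].
  + exfalso. apply (fsub_unit_false _ _ E2); [exact eq|change (0 < u p); lra].
  + right; lra.
- intros P2 Y d _ _ phi phi' U1 U2 FE.
  assert (h1 : forall i y, 0 <= phi i y <= 1) by (intros i y; apply (U1 i)).
  assert (h2 : forall i y, 0 <= phi' i y <= 1) by (intros i y; apply (U2 i)).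
  split; [apply (@key _ _ hu P2 _ _ _ h1 h2)|apply (@key _ _ hu P2 _ _ _ h2 h1)]; intro i; apply (FE i).
- intros P2.
  exists [set K : {set 'I_n} | `[< exists z, in_cube n z /\ u z = 0 /\
          forall i, z i = 0 <-> i \in K >] ].
  intros z cz; split.
  + intros uz. exists [set i | `[< z i = 0 >] ].
    * rewrite inE. apply/asboolP. exists z. split; [exact cz|split; [exact uz|]].
      intro i. rewrite inE. split; [intro h; apply/asboolP; exact h|intro h; exact (asboolW h)].
    * intro i. rewrite inE. split; [intro h; apply/asboolP; exact h|intro h; exact (asboolW h)].
  + intros [K hK hz]. rewrite inE in hK. apply asboolW in hK.
    destruct hK as [z' [cz' [uz' hz']]].
    assert (pat : forall i, z' i = 0 <-> z i = 0).
    { intro i. rewrite (hz' i) (hz i). tauto. }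
    destruct (P2 z' z cz' cz pat) as [[_ h]|[h _]]; [exact h|lra].
- intros [A HA] p q cp cq hpq.
  destruct (hu0 p cp) as [up _]. destruct (hu0 q cq) as [uq _].
  destruct (Req_dec (u p) 0) as [ep|np].
  + left; split; [exact ep|].
    apply (HA q cq). destruct (proj1 (HA p cp) ep) as [K hK hz].
    exists K; [exact hK|]. intro i. rewrite <- (hz i). split; apply hpq.
  + right; split; [lra|].
    destruct (Req_dec (u q) 0) as [eq|nq]; [|lra].
    exfalso. apply np. apply (HA p cp). destruct (proj1 (HA q cq) eq) as [K hK hz].
    exists K; [exact hK|]. intro i. rewrite <- (hz i). split; apply hpq.
Qed.
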